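(* Let $n\ge 0$, $m\ge 1$ and $r\ge 1$ be integers. If $m$ is odd then \[ F_m^{\,n}L_mF_{rm}\;\Big|\;F_{m(r+1)}^{\,n+1}-F_{m(r-1)}^{\,n+1}, \] and if $m$ is even then \[ F_m^{\,n}L_mF_{rm}\;\Big|\;F_{m(r+1)}^{\,n+1}+(-1)^nF_{m(r-1)}^{\,n+1}. \]
   Context: $F_n$ and $L_n$ denote the Fibonacci and Lucas numbers, defined by $F_0=0,F_1=1$, $L_0=2,L_1=1$ and $x_n=x_{n-1}+x_{n-2}$. *)

(* Defs.v *)
From mathcomp Require Import all_boot all_order all_algebra.
Set Implicit Arguments. Unset Strict Implicit. Unset Printing Implicit Defensive.
Import Order.TTheory GRing.Theory Num.Theory.

Fixpoint fib (n : nat) : nat :=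
  match n with
  | 0 => 0
  | 1 => 1
  | (n'.+1 as p).+1 => fib p + fib n'
  end.

Fixpoint lucas (n : nat) : nat :=
  match n with
  | 0 => 2
  | 1 => 1
  | (n'.+1 as p).+1 => lucas p + lucas n'
  end.

(* Main.v *)
Require Import Defs.
From mathcomp Require Import all_boot all_order all_algebra.
From mathcomp Require Import ring lra zify.
Import Order.TTheory GRing.Theory Num.Theory.
Local Open Scope ring_scope.

Lemma fibSS k : fib k.+2 = (fib k.+1 + fib k)%N.
Proof. by []. Qed.
Lemma lucasSS k : lucas k.+2 = (lucas k.+1 + lucas k)%N.
Proof. by []. Qed.

Lemma fib_add b : forall a, fib (a + b.+1) = (fib a.+1 * fib b.+1 + fib a * fib b)%N.
Proof.
elim/ltn_ind: b => b IH a.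
case: b IH => [|[|b]] IH.
- by rewrite addn1 /= muln1 muln0 addn0.
- by rewrite addn2 /= muln1 muln1.
- have -> : fib (a + b.+3) = (fib (a + b.+2) + fib (a + b.+1))%N by rewrite !addnS.
  rewrite (IH b.+1 _ a) // (IH b _ a) //.
  rewrite (fibSS b.+1) (fibSS b); lia.
Qed.

Lemma fib_dvd m k : (fib m %| fib (m * k))%N.
Proof.
case: m => [|m]; first by rewrite mul0n.
elim: k => [|k IH]; first by rewrite muln0 dvdn0.
rewrite mulnS addnC fib_add.
by apply: dvdn_add; [apply: dvdn_mull | apply: dvdn_mulr].
Qed.

Lemma fib_luc b : forall c,
  (fib (c + 2 * b))%:Z + (-1) ^+ b * (fib c)%:Z = (fib (c + b))%:Z * (lucas b)%:Z.
Proof.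
elim/ltn_ind: b => b IH c.
case: b IH => [|[|b]] IH.
- by rewrite muln0 addn0 expr0 mul1r mulrC -mulr2n -mulr_natl.
- rewrite muln1 addn2 addn1 fibSS expr1 /= PoszD; ring.
- have h1 := IH b.+1 (leqnn _) c.+1.
  have h2 := IH b (ltnW (leqnn _)) c.+2.
  rewrite lucasSS PoszD mulrDr.
  have -> : (c + b.+2 = c.+1 + b.+1)%N by lia.
  rewrite -h1.
  have -> : (c.+1 + b.+1 = c.+2 + b)%N by lia.
  rewrite -h2.
  have -> : (c + 2 * b.+2 = (c + 2 * b).+4)%N by lia.
  have -> : (c.+2 + 2 * b = (c + 2 * b).+2)%N by lia.
  have -> : (c.+1 + 2 * b.+1 = (c + 2 * b).+3)%N by lia.
  rewrite (fibSS (c + 2 * b).+2) (fibSS c) !PoszD !exprS; ring.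
Qed.

Lemma dvd_key (d x y x' y' t : int) n :
  x = d * x' -> y = d * y' -> x - y = t -> (d ^+ n * t %| x ^+ n.+1 - y ^+ n.+1)%Z.
Proof.
move=> -> -> <-; apply/dvdzP.
exists (\sum_(i < n.+1) x' ^+ (n.+1.-1 - i) * y' ^+ i).
rewrite !exprMn -mulrBr subrXX exprS; ring.
Qed.

Theorem mainTheorem16 (n m r : nat) (hm : (1 <= m)%N) (hr : (1 <= r)%N) :
  (odd m ->
     ((fib m)%:Z ^+ n * (lucas m)%:Z * (fib (r * m))%:Z
        %| (fib (m * r.+1))%:Z ^+ n.+1 - (fib (m * r.-1))%:Z ^+ n.+1)%Z) /\
  (~~ odd m ->
     ((fib m)%:Z ^+ n * (lucas m)%:Z * (fib (r * m))%:Z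
        %| (fib (m * r.+1))%:Z ^+ n.+1 + (-1) ^+ n * (fib (m * r.-1))%:Z ^+ n.+1)%Z).
Proof.
have e1 : (m * r.-1 + 2 * m = m * r.+1)%N by case: r hr => // r0 _; lia.
have e2 : (m * r.-1 + m = r * m)%N by case: r hr {e1} => // r0 _; lia.
have E := fib_luc m (m * r.-1).
rewrite e1 e2 in E.
have /dvdnP [a Ha] := fib_dvd m r.+1.
have /dvdnP [b Hb] := fib_dvd m r.-1.
rewrite -mulrA; split => Hm.
- apply: (@dvd_key _ _ _ a%:Z b%:Z).
  + by rewrite Ha PoszM mulrC.
  + by rewrite Hb PoszM mulrC.
  + by rewrite -signr_odd Hm expr1 mulN1r in E; rewrite mulrC -E.
- have -> : (-1) ^+ n * (fib (m * r.-1))%:Z ^+ n.+1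
      = - ((- (fib (m * r.-1))%:Z) ^+ n.+1).
    by rewrite (exprNn (Posz (fib (m * r.-1))) n.+1) (exprS (-1) n) mulN1r mulNr opprK.
  apply: (@dvd_key _ _ _ a%:Z (- b%:Z)).
  + by rewrite Ha PoszM mulrC.
  + by rewrite Hb PoszM mulrN mulrC.
  + by rewrite -signr_odd (negbTE Hm) expr0 mul1r in E; rewrite opprK mulrC -E.
Qed.
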